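(* Let $\alpha=(\alpha_1,\ldots,\alpha_n)$ be a composition, and suppose there is $1\le r\le n-1$ with $\alpha_r<\alpha_{r+1}$. Let $w\in S_n$ be a permutation in which the value $r$ appears before the value $r+1$. Then \[x(w)=x(s_rw)\cdot s_r.\]
   Context: A composition is a sequence of $n$ nonnegative integers. The skyline diagram $D(\alpha)$ is the set of boxes $(i,j)$ (row $i$, column $j$, rows numbered top to bottom) with $1\le j\le\alpha_i$. For $w=w_1\cdots w_n\in S_n$, the filling $\mathcal{F}_w(D(\alpha))$ is defined column by column: for each column $j$, for $k=1,\ldots,n$ in turn, place $w_k$ into the topmost still-empty box of column $j$ of $D(\alpha)$ whose row index is $\ge w_k$, skipping $w_k$ if no such box exists. Then $x(w)=(x_1,\ldots,x_n)$, where $x_k$ is the number of appearances of $k$ in $\mathcal{F}_w(D(\alpha))$. Here $s_rw$ is the permutation obtained from $w$ by interchanging the values $r$ and $r+1$, and for $v\in\mathbb{R}^n$, $v\cdot s_r$ is $v$ with its $r$-th and $(r+1)$-th entries swapped. *)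

(* Defs.v *)
(* Everything is 0-indexed: rows 0..n-1, values 0..n-1,
   columns 0..(max alpha)-1; box (i,j) is in D(alpha) iff j < alpha i.
   Shifting rows and values by the same amount preserves "row >= value". *)
From mathcomp Require Import all_boot all_fingroup.
Set Implicit Arguments. Unset Strict Implicit. Unset Printing Implicit Defensive.

(* Remove from the increasing list of empty rows [E] the first (= topmost)
   row [i] with [v <= i]; [None] if there is none. *)
Fixpoint take_row (v : nat) (E : seq nat) : option (seq nat) :=
  match E with
  | [::] => None
  | i :: E' => if v <= i then Some E'
               else match take_row v E' with
                    | Some E'' => Some (i :: E'')
                    | None => None
                    end
  end.

(* Fill one column whose empty boxes are the rows [E] (increasing), inserting
   the values [vals] in order; returns the list of values actually placed. *)
Fixpoint fill_column (E : seq nat) (vals : seq nat) : seq nat :=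
  match vals with
  | [::] => [::]
  | v :: vs => match take_row v E with
               | Some E' => v :: fill_column E' vs
               | None => fill_column E vs
               end
  end.

Definition column_rows n (alpha : 'I_n -> nat) (j : nat) : seq nat :=
  [seq i <- iota 0 n | j < (if insub i is Some k then alpha k else 0)].

Definition one_line n (w : 'S_n) : seq nat := [seq val (w k) | k <- enum 'I_n].

(* x(w)_k : number of appearances of k in F_w(D(alpha)) *)
Definition xvec n (alpha : 'I_n -> nat) (w : 'S_n) (k : 'I_n) : nat :=
  \sum_(j < \max_(i : 'I_n) alpha i)
     count_mem (val k) (fill_column (column_rows alpha j) (one_line w)).

(* s_r w : interchange the values r and r' in w  (k |-> tperm r r' (w k)) *)
Definition swap_vals n (r r' : 'I_n) (w : 'S_n) : 'S_n := (w * tperm r r')%g.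

(* Main.v *)
Require Import Defs.
From mathcomp Require Import all_boot all_fingroup zify.
Set Implicit Arguments. Unset Strict Implicit. Unset Printing Implicit Defensive.

Definition sg (r v : nat) : nat :=
  if v == r then r.+1 else if v == r.+1 then r else v.

Lemma sgK r : involutive (sg r).
Proof.
move=> v; rewrite /sg; repeat (case: eqP => /=); lia.
Qed.

Lemma take_row_subseq v E E1 : take_row v E = Some E1 -> subseq E1 E.
Proof.
elim: E E1 => [|i E IH] E1 //=.
case: ifP => _; first by case=> <-; exact: subseq_cons.
case h: (take_row v E) => [E2|] //; case=> <-.
by rewrite /= eqxx; exact: IH.
Qed.

Lemma take_row_low v E E1 y : take_row v E = Some E1 -> y \in E -> y < v -> y \in E1.
Proof.
elim: E E1 => [|i E IH] E1 //=.
case: ifP => hv.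
  case=> <-; rewrite inE => /orP [/eqP ->|//]; by rewrite ltnNge hv.
case h: (take_row v E) => [E2|] //; case=> <-.
rewrite !inE => /orP [->//|yE] yv; by rewrite (IH _ h yE yv) orbT.
Qed.

Lemma take_row_sgA r v E : r \notin E -> take_row (sg r v) E = take_row v E.
Proof.
elim: E => [|i E IH] //=; rewrite inE negb_or => /andP [ri rE].
rewrite IH //.
suff -> : (sg r v <= i) = (v <= i) by [].
move: ri; rewrite /sg; repeat (case: eqP => /=); lia.
Qed.

Lemma fill_A r E s : r \notin E ->
  fill_column E (map (sg r) s) = map (sg r) (fill_column E s).
Proof.
elim: s E => [|v s IH] E rE //=.
rewrite take_row_sgA //.
case h: (take_row v E) => [E1|]; last exact: IH.
rewrite /= IH //.
apply: contra rE; exact: (mem_subseq (take_row_subseq h)).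
Qed.
Definition MRel r (E E' : seq nat) := exists F1 F2,
  [/\ all (fun x => x < r) F1, all (fun x => r.+1 < x) F2,
      E = F1 ++ r.+1 :: F2 & E' = F1 ++ r :: F2].

Lemma TM r v E E' : v != r -> MRel r E E' ->
  match take_row v E, take_row (sg r v) E' with
  | Some E1, Some E1' => MRel r E1 E1' \/ (E1 = E1' /\ r \notin E1)
  | None, None => True
  | _, _ => False end.
Proof.
move=> hv [F1 [F2 [h1 h2 -> ->]]]; elim: F1 h1 => [|i F1 IH] /=.
  move=> _; case: (leqP v r.+1) => hvr.
    have -> : sg r v <= r by move: hv hvr; rewrite /sg; repeat (case: eqP => /=); lia.
    right; split => //; apply/negP => hr; move/allP: h2 => /(_ _ hr); lia.
  have -> : sg r v = v by move: hvr; rewrite /sg; repeat (case: eqP => /=); lia.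
  rewrite leqNgt (ltnW hvr) /=.
  case h: (take_row v F2) => [F2'|] //; left; exists [::], F2'; split => //.
  by apply/allP => x /(mem_subseq (take_row_subseq h)); exact: (allP h2).
move=> /andP [ir h1].
case: (leqP v i) => hvi.
  have -> : sg r v = v by move: hvi ir; rewrite /sg; repeat (case: eqP => /=); lia.
  by rewrite hvi; left; exists F1, F2.
have -> : (sg r v <= i) = false.
  by apply/negbTE; move: hvi ir hv; rewrite /sg; repeat (case: eqP => /=); lia.
move: (IH h1).
case: (take_row v _) => [E1|]; case: (take_row (sg r v) _) => [E1'|] // [].
  move=> [G1 [G2 [g1 g2 -> ->]]]; left; exists (i :: G1), G2; split => //=.
  by rewrite ir.
move=> [-> hr]; right; split => //; rewrite inE negb_or hr andbT; lia.
Qed.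

Lemma fill_M r s E E' : r \notin s -> MRel r E E' ->
  fill_column E' (map (sg r) s) = map (sg r) (fill_column E s).
Proof.
elim: s E E' => [|v s IH] E E' //=; rewrite inE negb_or => /andP [hv hs] hM.
have := TM (r := r) (v := v) (ltac:(by rewrite eq_sym)) hM.
case: (take_row v E) => [E1|]; case: (take_row (sg r v) E') => [E1'|] //.
  case=> [hM1|[-> hr]] /=; [by rewrite (IH _ _ hs hM1) | by rewrite fill_A].
by move=> _; exact: IH.
Qed.

Lemma decomp r E : sorted ltn E -> r \in E -> r.+1 \in E ->
  exists F1 F2, [/\ all (fun x => x < r) F1, all (fun x => r.+1 < x) F2 &
                 E = F1 ++ r :: r.+1 :: F2].
Proof.
elim: E => [|i E IH] //= hs.
have hall := order_path_min ltn_trans hs.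
have hsE := path_sorted hs.
case: (eqVneq r i) => [eri|hri]; first (subst i; move=> _).
  rewrite inE eq_sym (ltn_eqF (ltnSn r)) /= => hin.
  move: hs hin; case: E {IH hall hsE} => [|j E] //= /andP [rj hpj].
  rewrite inE; case: (eqVneq (r.+1) j) => [<-|hrj] /= hin.
    exists [::], E; split => //; apply: sub_all (order_path_min ltn_trans hpj) => y /=; lia.
  have := allP (order_path_min ltn_trans hpj) _ hin; lia.
rewrite !inE (negbTE hri) /= => hr hr1.
have ir : i < r := allP hall _ hr.
have hr1' : r.+1 \in E by move: hr1; case: eqP => //; lia.
have [F1 [F2 [h1 h2 ->]]] := IH hsE hr hr1'.
by exists (i :: F1), F2; split => //=; rewrite ir.
Qed.

Lemma take_row_cat v x F1 F2 : all (fun y => y < v) F1 -> v <= x ->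
  take_row v (F1 ++ x :: F2) = Some (F1 ++ F2).
Proof.
move=> h1 hx; elim: F1 h1 => [|i F1 IH] /=; first by rewrite hx.
by move=> /andP [iv /IH ->]; rewrite leqNgt iv.
Qed.

Lemma inv_pres r v E E1 : sorted ltn E -> (r \in E -> r.+1 \in E) ->
  v != r -> v != r.+1 -> take_row v E = Some E1 -> r \in E1 -> r.+1 \in E1.
Proof.
elim: E E1 => [|i E IH] E1 //= hs hinv hvr hvr1.
have hall := order_path_min ltn_trans hs.
have hsE := path_sorted hs.
case: ifP => hvi.
  case=> <- hr; have := hinv; rewrite !inE hr orbT => /(_ isT) /orP [/eqP ei|//].
  have := allP hall _ hr; lia.
case h: (take_row v E) => [E2|] //; case=> <-; rewrite !inE.
case/orP => [/eqP ri|hr].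
  have hr1 : r.+1 \in E.
    move: hinv; rewrite !inE ri eqxx => /(_ isT) /orP [/eqP|//]; lia.
  apply/orP; right; apply: (take_row_low h hr1); move: hvi hvr hvr1; rewrite ri; lia.
apply/orP; right; apply: (IH _ hsE _ hvr hvr1 h hr).
move=> hrE; have := hinv; rewrite !inE hrE orbT => /(_ isT) /orP [/eqP ei|//].
have := allP hall _ hrE; lia.
Qed.

Lemma fill_P r s E : sorted ltn E -> (r \in E -> r.+1 \in E) -> uniq s ->
  index r s <= index r.+1 s ->
  fill_column E (map (sg r) s) = map (sg r) (fill_column E s).
Proof.
elim: s E => [|v s IH] E // hs hinv; rewrite cons_uniq => /andP [vs us].
case: (boolP (r \in E)) => hrE; last by move=> _; exact: fill_A.
have hr1E := hinv hrE.
case: (eqVneq v r) => [evr|hvr].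
  subst v; move=> _; have [F1 [F2 [h1 h2 ->]]] := decomp hs hrE hr1E.
  rewrite /= {1}/sg eqxx (@take_row_cat r r F1 (r.+1 :: F2) h1 (leqnn r)).
  rewrite -cat_rcons (@take_row_cat r.+1 r.+1 (rcons F1 r) F2); last first.
  - by [].
  - by rewrite all_rcons ltnSn /=; apply: sub_all h1 => y; lia.
  have sgr : sg r r = r.+1 by rewrite /sg eqxx.
  rewrite /= cat_rcons sgr; congr (_ :: _).
  apply: fill_M => //.
  by exists F1, F2.
case: (eqVneq v r.+1) => [evr1|hvr1]; first by subst v; rewrite /= eqxx; case: eqP => //; lia.
rewrite /= (negbTE hvr) (negbTE hvr1) ltnS => hidx.
have sgv : sg r v = v by rewrite /sg (negbTE hvr) (negbTE hvr1).
rewrite sgv; case h: (take_row v E) => [E1|]; last exact: IH.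
rewrite /= sgv IH //.
- exact: (subseq_sorted ltn_trans (take_row_subseq h) hs).
- exact: (inv_pres hs hinv hvr hvr1 h).
Qed.

Lemma val_tperm n (r r' x : 'I_n) : val r' = (val r).+1 ->
  val (tperm r r' x) = sg (val r) (val x).
Proof.
move=> h; rewrite /sg -h !val_eqE.
case: tpermP => [->|->|/eqP hr /eqP hr'].
- by rewrite eqxx.
- by rewrite eqxx; case: eqVneq => // e; move: h; rewrite e; lia.
- by rewrite (negbTE hr) (negbTE hr').
Qed.

Lemma index_one_line n (w : 'S_n) (x : 'I_n) :
  index (val x) (one_line w) = val ((w^-1)%g x).
Proof.
rewrite /one_line -{1}(permKV w x).
rewrite (index_map (f := fun k => val (w k))) ?index_enum_ord //.
by move=> a b /val_inj /perm_inj.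
Qed.

Unset Implicit Arguments.
Theorem proposition4p4 (n : nat) (alpha : 'I_n -> nat) (r r' : 'I_n)
  (hr' : val r' = (val r).+1)
  (halpha : alpha r < alpha r')
  (w : 'S_n)
  (hw : val ((w^-1)%g r) < val ((w^-1)%g r')) :
  forall k : 'I_n, xvec alpha w k = xvec alpha (swap_vals r r' w) (tperm r r' k).
Proof.
move=> k; rewrite /xvec; apply: eq_bigr => j _.
have hL : one_line (swap_vals r r' w) = map (sg (val r)) (one_line w).
  rewrite /one_line -map_comp; apply: eq_map => x /=.
  by rewrite /swap_vals permM val_tperm.
rewrite hL fill_P.
- rewrite val_tperm // count_map; apply: eq_count => y /=.
  by rewrite (inj_eq (can_inj (sgK _))).
- exact: (sorted_filter ltn_trans _ (iota_ltn_sorted 0 n)).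
- rewrite !mem_filter !mem_iota /= -hr' (valK r) (valK r').
  move=> /andP [h1 h2]; apply/andP; split; first exact: ltn_trans halpha.
  by rewrite add0n ltn_ord.
- rewrite /one_line map_inj_uniq ?enum_uniq //.
  by move=> a b /val_inj /perm_inj.
- by rewrite -hr' !index_one_line ltnW.
Qed.
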